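(* Let $G$ be a PMCFG and $\mathcal{M}(G)$ the automaton with respect to $G$. If $G$ is a $k$-MCFG, then $\mathcal{M}(G)$ is $k$-restricted.
   Context: Composition functions. Fix variables $x_i^j$ ($i,j\in\mathbb{N}_+$). For $s_1,\dots,s_\ell,s\in\mathbb{N}_+$ a composition function of sort $(s_1\cdots s_\ell,s)$ over $\Sigma$ is given by a tuple $[u_1,\dots,u_s]$ with each $u_i$ a string over $\Sigma\cup\{x_i^j : i\in[\ell], j\in[s_i]\}$; it maps $((w_1^1,\dots,w_1^{s_1}),\dots,(w_\ell^1,\dots,w_\ell^{s_\ell}))$ to the $s$-tuple obtained from $(u_1,\dots,u_s)$ by replacing each $x_i^j$ by $w_i^j$. Fan-out is $s$; linear means every variable occurs at most once in $u_1\cdots u_s$. PMCFG/MCFG. A PMCFG is $G=(N,\Sigma,I,R)$ with $N$ a finite set of nonterminals each with a sort in $\mathbb{N}_+$, $I$ a set of nonterminals of sort 1, and $R$ a finite set of rules $A\to f(A_1,\dots,A_\ell)$ where $f$ has sort $(s_1\cdots s_\ell,s)$, $A$ has sort $s$, $A_i$ has sort $s_i$. An MCFG has only linear composition functions; a $k$-MCFG is an MCFG with all rules of fan-out at most $k$. Tree stacks and TSA. A tree stack over $\Gamma$ ($@\notin\Gamma$) is $(\xi,\rho)$ with $\xi:\mathbb{N}_+^*\rightharpoonup\Gamma\cup\{@\}$ of finite prefix-closed domain, $\xi(\varepsilon)=@$, labels elsewhere in $\Gamma$, and $\rho\in\mathrm{dom}(\xi)$. Predicates: $\mathrm{bottom}$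 ($\rho=\varepsilon$), $\mathrm{equals}(\gamma)$ ($\xi(\rho)=\gamma$), and ''all''. Instructions: $\mathrm{id}$; $\mathrm{push}_n(\gamma)$ (defined iff $\rho n\notin\mathrm{dom}(\xi)$, result $(\xi[\rho n\mapsto\gamma],\rho n)$); $\mathrm{up}_n$ (defined iff $\rho n\in\mathrm{dom}(\xi)$, result $(\xi,\rho n)$); $\mathrm{down}$ ($(\xi,\rho n)\mapsto(\xi,\rho)$); $\mathrm{set}(\gamma)$ (defined iff $\rho\ne\varepsilon$, result $(\xi[\rho\mapsto\gamma],\rho)$). Initial tree stack $(\{\varepsilon\mapsto@\},\varepsilon)$. A TSA has finite states, initial state, final states and finitely many transitions $(q,\omega,p,f,q')$ ($\omega\in\Sigma\cup\{\varepsilon\}$); $(q,c,w)\vdash_\tau(q',c',w')$ iff $w=\omega w'$, $c\in p$, $f(c)=c'$ defined. A valid run goes from (initial state, initial tree stack, $w$) to (final state, some tree stack, $\varepsilon$) and recognises $w$. $k$-restricted: for every valid run and every position $\rho$, the number of transitions in the run having a $\mathrm{push}$- or $\mathrm{up}$-instruction after which the stack pointer equals $\rho$ is at most $k$. The automaton $\mathcal{M}(G)$ with respect to a PMCFG $G=(N,\Sigma,I,R)$. Let $\bar R=\{\langle r,i,j\rangle : r=A\to[u_1,\dots,u_s](A_1,\dots,A_\ell)\in R, i\in[s], j\in\{0,\dots,|u_i|\}\}$ and $\Box$ a fresh symbol. Stack alphabet $\Gamma=\{\Box\}\cup R\cup\bar R$; states $Q=\{q,q_+,q_- : q\in\bar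 R\cup\{\Box\}\}$ (with $q_+,q_-$ fresh copies); initial state $\Box$; final states $\{\Box\}$. The transition set is the smallest set containing: (i) for every $r=S\to[u](A_1,\dots,A_\ell)\in R$ with $S\in I$: $(\Box,\varepsilon,\text{all},\mathrm{push}_1(\Box),\langle r,1,0\rangle)$, $(\langle r,1,|u|\rangle,\varepsilon,\mathrm{equals}(\Box),\mathrm{set}(r),\Box_-)$, and $(\Box_-,\varepsilon,\text{all},\mathrm{down},\Box)$; (ii) for every $r=A\to[u_1,\dots,u_s](A_1,\dots,A_\ell)\in R$, $i\in[s]$, $j\in[|u_i|]$ such that the $j$-th symbol of $u_i$ is $\sigma\in\Sigma$: $(\langle r,i,j-1\rangle,\sigma,\text{all},\mathrm{id},\langle r,i,j\rangle)$; (iii) for every $r=A\to[u_1,\dots,u_s](A_1,\dots,A_\ell)\in R$, $i\in[s]$, $j\in[|u_i|]$, $\kappa\in[\ell]$, $r'=A_\kappa\to[v_1,\dots,v_{s'}](B_1,\dots,B_{\ell'})\in R$, $m\in[s']$ such that the $j$-th symbol of $u_i$ is $x_\kappa^m$, writing $q=\langle r,i,j\rangle$: $(\langle r,i,j-1\rangle,\varepsilon,\text{all},\mathrm{push}_\kappa(q),\langle r',m,0\rangle)$, $(\langle r,i,j-1\rangle,\varepsilon,\text{all},\mathrm{up}_\kappa,q_+)$, $(q_+,\varepsilon,\mathrm{equals}(r'),\mathrm{set}(q),\langle r',m,0\rangle)$, $(\langle r',m,|v_m|\rangle,\varepsilon,\mathrm{equals}(q),\mathrm{set}(r'),q_-)$,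 and $(q_-,\varepsilon,\text{all},\mathrm{down},q)$. *)

(* Defs.v *)
From Stdlib Require List.
From mathcomp Require Import all_boot.
Set Implicit Arguments.
Unset Strict Implicit.
Unset Printing Implicit Defensive.

(* Symbols of the strings u_i: a terminal, or a variable x_i^j
   (Var i j, 1-based indices i, j as in the paper). *)
Inductive sym (Sigma : Type) := Term of Sigma | Var of nat & nat.
Arguments Var {Sigma}.

(* A rule A -> [u_1,...,u_s](A_1,...,A_l). *)
Record rule (N : Type) (Sigma : Type) := Rule {
  lhs  : N;
  rfun : seq (seq (sym Sigma));
  rhs  : seq N
}.

Record pmcfg := PMCFG {
  nt      : eqType;
  term    : Type;
  sort    : nt -> nat;
  initial : nt -> bool;
  rules   : seq (rule nt term)
}.
Arguments sort : clear implicits.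
Arguments initial : clear implicits.
Arguments rules : clear implicits.

Definition occurs (Sigma : Type) (x : sym Sigma) (f : seq (seq (sym Sigma))) :=
  exists u, List.In u f /\ List.In x u.

(* r is a rule of G typed by a composition function of sort
   (sort A_1 ... sort A_l, sort A) *)
Definition wf_rule (G : pmcfg) (r : rule (nt G) (term G)) : Prop :=
  size (rfun r) = sort G (lhs r) /\
  forall i j, occurs (Var i j) (rfun r) ->
    (1 <= i <= size (rhs r)) /\
    (1 <= j <= sort G (nth (lhs r) (rhs r) i.-1)).

Definition wf_pmcfg (G : pmcfg) : Prop :=
  (exists l : seq (nt G), forall A, A \in l) /\
  (exists l : seq (term G), forall a, List.In a l) /\
  (forall A, 0 < sort G A) /\
  (forall A, initial G A -> sort G A = 1) /\
  (forall r, List.In r (rules G) -> wf_rule r).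

Definition is_var_ij (Sigma : Type) (i j : nat) (x : sym Sigma) : bool :=
  if x is Var i' j' then (i' == i) && (j' == j) else false.

Definition linear_rule (N Sigma : Type) (r : rule N Sigma) : Prop :=
  forall i j, count (is_var_ij i j) (flatten (rfun r)) <= 1.

Definition fanout (N Sigma : Type) (r : rule N Sigma) : nat := size (rfun r).

Definition is_kMCFG (G : pmcfg) (k : nat) : Prop :=
  forall r, List.In r (rules G) -> linear_rule r /\ fanout r <= k.

Inductive label (Gamma : Type) := At | Lab of Gamma.
Arguments At {Gamma}.

(* Positions are words over N_+ (lists of nats); rho n = rcons rho n. *)
Record tstack (Gamma : Type) := TS {
  xi  : seq nat -> option (label Gamma);
  ptr : seq nat
}.

Definition init_ts (Gamma : Type) : tstack Gamma :=
  TS (fun a : seq nat => if a == [::] then Some At else None) [::].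

Inductive tpred (Gamma : Type) := PAll | PBottom | PEquals of Gamma.
Arguments PAll {Gamma}.
Arguments PBottom {Gamma}.

Definition holds (Gamma : Type) (p : tpred Gamma) (c : tstack Gamma) : Prop :=
  match p with
  | PAll => True
  | PBottom => ptr c = [::]
  | PEquals g => xi c (ptr c) = Some (Lab g)
  end.

Inductive instr (Gamma : Type) :=
  IId | IPush of nat & Gamma | IUp of nat | IDown | ISet of Gamma.
Arguments IId {Gamma}.
Arguments IUp {Gamma}.
Arguments IDown {Gamma}.

Definition upd (Gamma : Type) (f : seq nat -> option (label Gamma))
  (a : seq nat) (v : label Gamma) : seq nat -> option (label Gamma) :=
  fun b => if b == a then Some v else f b.

Definition apply_instr (Gamma : Type) (f : instr Gamma) (c : tstack Gamma)
  : option (tstack Gamma) :=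
  match f with
  | IId => Some c
  | IPush n g =>
      if xi c (rcons (ptr c) n) is None
      then Some (TS (upd (xi c) (rcons (ptr c) n) (Lab g)) (rcons (ptr c) n))
      else None
  | IUp n =>
      if xi c (rcons (ptr c) n) is Some _
      then Some (TS (xi c) (rcons (ptr c) n))
      else None
  | IDown =>
      if ptr c is x :: s then Some (TS (xi c) (belast x s)) else None
  | ISet g =>
      if ptr c is [::] then None
      else Some (TS (upd (xi c) (ptr c) (Lab g)) (ptr c))
  end.

Definition is_push_or_up (Gamma : Type) (f : instr Gamma) : bool :=
  match f with IPush _ _ | IUp _ => true | _ => false end.

Record tsa := TSA {
  st    : Type;
  inp   : Type;
  gam   : Type;
  q0    : st;
  final : st -> Prop;
  trans : seq (st * option inp * tpred gam * instr gam * st)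
}.
Arguments q0 : clear implicits.
Arguments final : clear implicits.
Arguments trans : clear implicits.

Definition transition (M : tsa) :=
  (st M * option (inp M) * tpred (gam M) * instr (gam M) * st M)%type.

Definition conf (M : tsa) := (st M * tstack (gam M) * seq (inp M))%type.

Definition t_instr (M : tsa) (t : transition M) : instr (gam M) :=
  let '(_, _, _, f, _) := t in f.

Definition cons_opt (A : Type) (o : option A) (w : seq A) : seq A :=
  if o is Some a then a :: w else w.

Definition step (M : tsa) (t : transition M) (c c' : conf M) : Prop :=
  let '(q, om, p, f, q') := t in
  let '(q1, ts, w) := c in
  let '(q2, ts', w') := c' in
  q1 = q /\ q2 = q' /\ w = cons_opt om w' /\ holds p ts /\
  apply_instr f ts = Some ts'.

(* a run from c: a sequence of (transition, configuration reached) *)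
Fixpoint is_run (M : tsa) (c : conf M) (l : seq (transition M * conf M)) : Prop :=
  match l with
  | [::] => True
  | (t, c') :: l' => List.In t (trans M) /\ step t c c' /\ is_run c' l'
  end.

Definition init_conf (M : tsa) (w : seq (inp M)) : conf M :=
  (q0 M, init_ts (gam M), w).

Definition valid_run (M : tsa) (w : seq (inp M))
  (l : seq (transition M * conf M)) : Prop :=
  is_run (init_conf w) l /\
  let '(q, _, w') := last (init_conf w) (map snd l) in
  final M q /\ w' = [::].

Definition conf_ptr (M : tsa) (c : conf M) : seq nat :=
  let '(_, ts, _) := c in ptr ts.

Definition k_restricted (M : tsa) (k : nat) : Prop :=
  forall (w : seq (inp M)) (l : seq (transition M * conf M)),
    valid_run w l ->
    forall rho : seq nat,
      count (fun tc : transition M * conf M =>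
               is_push_or_up (t_instr tc.1) && (conf_ptr tc.2 == rho)) l <= k.

Section MG.
Variable G : pmcfg.
Local Notation N := (nt G).
Local Notation Sigma := (term G).
Local Notation R := (rule N Sigma).

(* Gamma = {Box} u R u Rbar, with Rbar elements <r,i,j> *)
Inductive mgam := GBox | GRule of R | GBar of R & nat & nat.

(* states q, q_+, q_- for q in Rbar u {Box} *)
Inductive mst :=
  SBox | SBoxP | SBoxM
| SBar of R & nat & nat | SBarP of R & nat & nat | SBarM of R & nat & nat.

Definition mtrans := (mst * option Sigma * tpred mgam * instr mgam * mst)%type.

Definition comp (r : R) (i : nat) : seq (sym Sigma) := nth [::] (rfun r) i.-1.

Definition trans_i (r : R) : seq mtrans :=
  if initial G (lhs r) then
    let u := comp r 1 in
    [:: (SBox, None, PAll, IPush 1 GBox, SBar r 1 0);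
        (SBar r 1 (size u), None, PEquals GBox, ISet (GRule r), SBoxM);
        (SBoxM, None, PAll, IDown, SBox)]
  else [::].

Definition trans_ij (r : R) (i j : nat) : seq mtrans :=
  match nth (Var 0 0) (comp r i) j.-1 with
  | Term a => [:: (SBar r i j.-1, Some a, PAll, IId, SBar r i j)]
  | Var kap m =>
      if (0 < kap) && (kap <= size (rhs r)) then
        flatten [seq
          (if (lhs r' == nth (lhs r) (rhs r) kap.-1)
              && (0 < m) && (m <= size (rfun r')) then
             let q := GBar r i j in
             [:: (SBar r i j.-1, None, PAll, IPush kap q, SBar r' m 0);
                 (SBar r i j.-1, None, PAll, IUp kap, SBarP r i j);
                 (SBarP r i j, None, PEquals (GRule r'), ISet q, SBar r' m 0);
                 (SBar r' m (size (comp r' m)), None, PEquals q, ISet (GRule r'),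
                    SBarM r i j);
                 (SBarM r i j, None, PAll, IDown, SBar r i j)]
           else [::])
        | r' <- rules G]
      else [::]
  end.

Definition trans_r (r : R) : seq mtrans :=
  trans_i r ++
  flatten [seq flatten [seq trans_ij r i j | j <- iota 1 (size (comp r i))]
          | i <- iota 1 (size (rfun r))].

Definition M_trans : seq mtrans := flatten [seq trans_r r | r <- rules G].

Definition M_of : tsa :=
  @TSA mst Sigma mgam SBox (fun q => q = SBox) M_trans.

End MG.

(* Main.v *)
Require Import Defs.
From mathcomp Require Import all_boot.
From mathcomp Require Import zify.
Set Implicit Arguments.
Unset Strict Implicit.
Unset Printing Implicit Defensive.

Lemma In_cat (T : Type) (x : T) (s1 s2 : seq T) :
  List.In x (s1 ++ s2) <-> List.In x s1 \/ List.In x s2.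
Proof.
elim: s1 => [|y s IH] /=; first by split; [right|case].
rewrite IH; tauto.
Qed.

Lemma In_flatten (T : Type) (x : T) (ss : seq (seq T)) :
  List.In x (flatten ss) -> exists s, List.In s ss /\ List.In x s.
Proof.
elim: ss => [|s ss IH] //= /In_cat [H|H]; first by exists s; auto.
by case: (IH H) => s' [H1 H2]; exists s'; auto.
Qed.

Lemma In_map (T U : Type) (f : T -> U) (y : U) (s : seq T) :
  List.In y (map f s) -> exists x, List.In x s /\ y = f x.
Proof.
elim: s => [|x s IH] //= [H|H]; first by exists x; auto.
by case: (IH H) => x' [H1 H2]; exists x'; auto.
Qed.

Lemma In_mem (T : eqType) (x : T) (s : seq T) : List.In x s -> x \in s.
Proof.
elim: s => [|y s IH] //= [->|H]; first by rewrite mem_head.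
by rewrite in_cons IH ?orbT.
Qed.

Lemma In_iota x a n : List.In x (iota a n) -> a <= x < a + n.
Proof. by move/In_mem; rewrite mem_iota. Qed.

Section Proof.
Variable G : pmcfg.
Variable k : nat.
Hypothesis wfG : wf_pmcfg G.
Hypothesis kG : is_kMCFG G k.

Notation R := (rule (nt G) (term G)).

Definition symat (r : R) i j := nth (Var 0 0) (Defs.comp r i) j.-1.

Definition sidec (r : R) i j kap m :=
  List.In r (rules G) /\ 0 < i <= size (rfun r) /\
  0 < j <= size (Defs.comp r i) /\ symat r i j = Var kap m /\ 0 < m <= k.

Inductive tcase : mtrans G -> Prop :=
| TC1 r : List.In r (rules G) -> initial G (lhs r) ->
    tcase (SBox G, None, PAll, IPush 1 (GBox G), SBar r 1 0)
| TC2 r : tcase (SBar r 1 (size (Defs.comp r 1)), None, PEquals (GBox G),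
                 ISet (GRule r), SBoxM G)
| TC3 : tcase (SBoxM G, None, PAll, IDown, SBox G)
| TC4 r i j a : tcase (SBar r i j.-1, Some a, PAll, IId, SBar r i j)
| TC5 r i j kap m r' : sidec r i j kap m ->
    tcase (SBar r i j.-1, None, PAll, IPush kap (GBar r i j), SBar r' m 0)
| TC6 r i j kap m : sidec r i j kap m ->
    tcase (SBar r i j.-1, None, PAll, IUp kap, SBarP r i j)
| TC7 r i j kap m r' : symat r i j = Var kap m ->
    tcase (SBarP r i j, None, PEquals (GRule r'), ISet (GBar r i j), SBar r' m 0)
| TC8 r i j r' m : tcase (SBar r' m (size (Defs.comp r' m)), None,
                         PEquals (GBar r i j), ISet (GRule r'), SBarM r i j)
| TC9 r i j : tcase (SBarM r i j, None, PAll, IDown, SBar r i j).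

Lemma trans_inv t : List.In t (M_trans G) -> tcase t.
Proof.
move=> Hin; have := In_flatten Hin; move=> [s [Hs Ht]]; have [r [Hr Es]] := In_map Hs; subst s; clear Hs.
rewrite /trans_r in Ht; case: (proj1 (In_cat _ _ _) Ht) => {}Ht.
  rewrite /trans_i in Ht; case: ifP Ht => Hini //= Ht.
  case: Ht => [<-|[<-|[<-|[]]]]; [exact: TC1|exact: TC2|exact: TC3].
have [s1 [Hs Ht2]] := In_flatten Ht; clear Ht; move: Ht2 => Ht; have [i [Hi Es]] := In_map Hs; subst s1; clear Hs.
have [s2 [Hs Ht2]] := In_flatten Ht; clear Ht; move: Ht2 => Ht; have [j [Hj Es]] := In_map Hs; subst s2; clear Hs.
move/In_iota: Hi => Hi; move/In_iota: Hj => Hj.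
rewrite /trans_ij in Ht.
destruct (nth (Var 0 0) (Defs.comp r i) j.-1) as [a|kap m] eqn:E.
  by case: Ht => [<-|[]]; exact: TC4.
case: ifP Ht => Hk //= Ht.
have [s3 [Hs Ht2]] := In_flatten Ht; clear Ht; move: Ht2 => Ht; have [r' [Hr' Es]] := In_map Hs; subst s3; clear Hs.
case: ifP Ht => Hc //= Ht.
move/andP: Hc => [/andP [/eqP Hl Hm0] Hm].
have sc : sidec r i j kap m.
  split=> //; split; first by move: Hi; rewrite add1n ltnS => /andP[-> ->].
  split; first by move: Hj; rewrite add1n ltnS => /andP[-> ->].
  split=> //; rewrite Hm0 /=.
  apply: leq_trans Hm _; exact: (proj2 (kG Hr')).
case: Ht => [<-|[<-|[<-|[<-|[<-|[]]]]]].
- exact: TC5 sc.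
- exact: TC6 sc.
- exact: TC7 E.
- exact: TC8.
- exact: TC9.
Qed.


Definition parent (s : seq nat) : seq nat :=
  if s is x :: s' then belast x s' else [::].

Lemma parent_rcons p a : parent (rcons p a) = p.
Proof. by case: p => [|x p] //=; rewrite belast_rcons. Qed.

Definition pref (s p : seq nat) : bool := take (size s) p == s.

Lemma pref_refl p : pref p p.
Proof. by rewrite /pref take_size. Qed.

Lemma pref_size s p : pref s p -> size s <= size p.
Proof.
by move/eqP=> <-; rewrite size_take_min geq_minr.
Qed.

Lemma pref_nil s : pref s [::] -> s = [::].
Proof. by case: s. Qed.

Lemma pref_rcons s p a :
  pref s (rcons p a) = (s == rcons p a) || pref s p.
Proof.
rewrite /pref -cats1.
case: (leqP (size s) (size p)) => Hs.
  rewrite takel_cat //.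
  have -> : (s == p ++ [:: a]) = false.
    by apply/negbTE/eqP => E; move: Hs; rewrite E size_cat addn1 ltnn.
  done.
rewrite take_oversize; last by rewrite size_cat addn1.
rewrite take_oversize; last exact: ltnW.
rewrite [X in X = _]eq_sym; case: eqP => //= _.
by apply/esym/negbTE/eqP => E; move: Hs; rewrite E ltnn.
Qed.

Lemma pref_uniq s s' p :
  pref s p -> pref s' p -> size s = size s' -> s = s'.
Proof. by move=> /eqP E1 /eqP E2 Hs; rewrite -E1 -E2 Hs. Qed.

Lemma pref_rcons_l s a p : pref (rcons s a) p -> pref s p.
Proof.
move/eqP=> E; apply/eqP.
have Hs : size s <= size (rcons s a) by rewrite size_rcons.
rewrite size_rcons in E.
by rewrite -(take_takel p (leqnSn (size s))) E -cats1 take_size_cat.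
Qed.

Notation mst := (mst G).
Notation tst := (tstack (mgam G)).
Notation M := (M_of G).
Notation item := (transition M * conf M)%type.

Definition glab (q : mst) (ts : tst) (s : seq nat) : option (label (mgam G)) :=
  if s == ptr ts then
    match q with
    | SBarP r i j | SBarM r i j => Some (Lab (GBar r i j))
    | SBoxM => Some (Lab (GBox G))
    | _ => xi ts s
    end
  else xi ts s.

Definition onact (o : option (label (mgam G))) : Prop :=
  match o with
  | Some (Lab (GBox)) => True
  | Some (Lab (GBar _ _ _)) => True
  | _ => False
  end.

Record Ent := mkE { etau : seq nat; er : R; ei : nat; ej : nat }.

Definition mofr (r : R) i j : nat :=
  match symat r i j with Var _ m => m | _ => 0 end.

Definition ent_of (it : item) : option Ent :=
  match it with
  | ((_, _, _, f, q'), (_, ts', _)) =>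
    match f with
    | IPush _ (GBar r i j) => Some (mkE (ptr ts') r i j)
    | IUp _ => match q' with SBarP r i j => Some (mkE (ptr ts') r i j) | _ => None end
    | _ => None
    end
  end.

Definition AR (q : mst) (ts : tst) (pi : seq nat) (i p : nat) : Prop :=
  (ptr ts = pi /\ exists r, q = SBar r i p)
  \/ (ptr ts = pi /\ p = 0 /\ exists r i' j', q = SBarP r i' j' /\ i = mofr r i' j')
  \/ (exists kap r, glab q ts (rcons pi kap) = Some (Lab (GBar r i p))).

Definition RA (q : mst) (ts : tst) (pi : seq nat) (r : R) : Prop :=
  (ptr ts = pi /\ exists i p, q = SBar r i p)
  \/ (exists kap i j, glab q ts (rcons pi kap) = Some (Lab (GBar r i j)))
  \/ xi ts pi = Some (Lab (GRule r)).

Definition Started (E : seq Ent) (pi : seq nat) (m : nat) : Prop :=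
  size pi <= 1 \/ exists e, List.In e E /\ etau e = pi /\ mofr (er e) (ei e) (ej e) = m.

Definition Evar (e : Ent) : Prop :=
  List.In (er e) (rules G) /\ 0 < ei e <= size (rfun (er e)) /\
  0 < ej e <= size (Defs.comp (er e) (ei e)) /\
  exists m, symat (er e) (ei e) (ej e) = Var (last 0 (etau e)) m /\ 0 < m <= k.

Definition stinv (q : mst) (ts : tst) : Prop :=
  match q with
  | SBox => ptr ts = [::]
  | SBoxP => False
  | SBoxM => size (ptr ts) = 1 /\ exists r, xi ts (ptr ts) = Some (Lab (GRule r))
  | SBar _ _ _ => ptr ts != [::]
  | SBarP _ _ _ => 2 <= size (ptr ts)
  | SBarM _ _ _ => 2 <= size (ptr ts) /\ exists r, xi ts (ptr ts) = Some (Lab (GRule r))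
  end.

Definition P1 (it : item) : bool :=
  is_push_or_up (t_instr it.1) && (size (conf_ptr it.2) <= 1).

Definition Pt (t : seq nat) (it : item) : bool :=
  is_push_or_up (t_instr it.1) && (conf_ptr it.2 == t).

Definition EE (h : seq item) := pmap ent_of h.

Record Inv (h : seq item) (q : mst) (ts : tst) : Prop := {
  iP0 : xi ts [::] = Some At;
  iP2 : forall s, s != [::] -> (onact (glab q ts s) <-> pref s (ptr ts));
  iP4a : forall s, glab q ts s = Some (Lab (GBox G)) -> size s = 1;
  iP4b : forall s r i j, glab q ts s = Some (Lab (GBar r i j)) -> 2 <= size s;
  iP3 : stinv q ts;
  iR : count P1 h = 0 \/ (count P1 h = 1 /\ xi ts [:: 1] <> None /\ 0 < k);
  iC : forall t, 2 <= size t ->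
         count (Pt t) h = count (fun e => etau e == t) (EE h);
  iE0 : forall e, List.In e (EE h) -> xi ts (parent (etau e)) <> None;
  iEvar : forall e, List.In e (EE h) -> Evar e;
  iEuniq : uniq [seq (etau e, ei e, ej e) | e <- EE h];
  iErule : forall e, List.In e (EE h) -> RA q ts (parent (etau e)) (er e);
  iEprog : forall e p, List.In e (EE h) -> AR q ts (parent (etau e)) (ei e) p -> ej e <= p;
  iEstart : forall e, List.In e (EE h) -> Started (EE h) (parent (etau e)) (ei e);
  iEact : forall pi i p, AR q ts pi i p -> Started (EE h) pi i
}.

Lemma glab_off q ts s : s != ptr ts -> glab q ts s = xi ts s.
Proof. by rewrite /glab => /negbTE ->. Qed.

Lemma glab_SBar r i j ts s : glab (SBar r i j) ts s = xi ts s.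
Proof. by rewrite /glab; case: ifP. Qed.

Lemma rcons_nil (p : seq nat) a : rcons p a != [::].
Proof. by case: p. Qed.

Lemma GBar_pref h q ts s kap r i j :
  Inv h q ts -> glab q ts (rcons s kap) = Some (Lab (GBar r i j)) ->
  pref (rcons s kap) (ptr ts).
Proof.
move=> I E; apply/(iP2 I (rcons_nil _ _)); by rewrite E.
Qed.

Lemma RA_fun h q ts pi r1 r2 :
  Inv h q ts -> RA q ts pi r1 -> RA q ts pi r2 -> r1 = r2.
Proof.
move=> I.
have d1d2 : forall r i p kap r' i' j', ptr ts = pi -> q = SBar r i p ->
    glab q ts (rcons pi kap) <> Some (Lab (GBar r' i' j')).
  move=> r i p kap r' i' j' Ep Eq E.
  have := pref_size (GBar_pref I E); by rewrite Ep size_rcons ltnn.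
have d1d3 : forall r i p r', ptr ts = pi -> q = SBar r i p ->
    xi ts pi <> Some (Lab (GRule r')).
  move=> r i p r' Ep Eq E; subst q pi.
  have Hne : ptr ts != [::] by have := iP3 I.
  have := proj2 (iP2 I Hne) (pref_refl _); by rewrite glab_SBar E.
have d2d3 : forall kap r i j r', glab q ts (rcons pi kap) = Some (Lab (GBar r i j)) ->
    xi ts pi <> Some (Lab (GRule r')).
  move=> kap r i j r' E1 E2.
  have Hp := GBar_pref I E1.
  case: (eqVneq pi [::]) => [Epi|Hne].
    by move: E2; rewrite Epi (iP0 I).
  have := proj2 (iP2 I Hne) (pref_rcons_l Hp).
  rewrite glab_off ?E2 //.
  apply/eqP=> Ep; have := pref_size Hp; by rewrite -Ep size_rcons ltnn.
case=> [[Ep [i [p Eq]]]|[[kap [i [j E]]]|E]];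
case=> [[Ep' [i' [p' Eq']]]|[[kap' [i' [j' E']]]|E']].
- by move: Eq'; rewrite Eq => [[]].
- by case: (d1d2 _ _ _ _ _ _ _ Ep Eq E').
- by case: (d1d3 _ _ _ _ Ep Eq E').
- by case: (d1d2 _ _ _ _ _ _ _ Ep' Eq' E).
- have Hs : rcons pi kap = rcons pi kap'.
    apply: (pref_uniq (GBar_pref I E) (GBar_pref I E')).
    by rewrite !size_rcons.
  by move: E'; rewrite -Hs E => [[]].
- by case: (d2d3 _ _ _ _ _ E E').
- by case: (d1d3 _ _ _ _ Ep' Eq' E).
- by case: (d2d3 _ _ _ _ _ E' E).
- by move: E'; rewrite E => [[]].
Qed.

Lemma count2 (T : Type) (x0 : T) (P : pred T) (s : seq T) a b :
  a != b -> a < size s -> b < size s -> P (nth x0 s a) -> P (nth x0 s b) ->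
  1 < count P s.
Proof.
elim: s a b => [|x s IH] [|a] [|b] //=.
- move=> _ _ Hb -> Pb; rewrite add1n ltnS -has_count.
  by apply/(has_nthP x0); exists b.
- move=> _ Ha _ Pa ->; rewrite add1n ltnS -has_count.
  by apply/(has_nthP x0); exists a.
- move=> Hab Ha Hb Pa Pb; apply: leq_trans (IH a b Hab Ha Hb Pa Pb) _.
  exact: leq_addl.
Qed.

Lemma nth_sumn (ns : seq nat) a : nth 0 ns a <= sumn ns.
Proof.
elim: ns a => [|y s IH'] [|a] //=; first exact: leq_addr.
apply: leq_trans (IH' a) _; exact: leq_addl.
Qed.

Lemma sumn2 (ns : seq nat) a b :
  a != b -> a < size ns -> b < size ns -> 0 < nth 0 ns a -> 0 < nth 0 ns b ->
  1 < sumn ns.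
Proof.
elim: ns a b => [|x s IH] [|a] [|b] //=.
- move=> _ _ Hb Hx Pb; have := leq_trans Pb (nth_sumn s b); move: Hx.
  by case: x => // x _; case: (sumn s) => // n _; rewrite addSn addnS.
- move=> _ Ha _ Pa Hx; have := leq_trans Pa (nth_sumn s a); move: Hx.
  by case: x => // x _; case: (sumn s) => // n _; rewrite addSn addnS.
- move=> Hab Ha Hb Pa Pb; apply: leq_trans (IH a b Hab Ha Hb Pa Pb) _.
  exact: leq_addl.
Qed.

Lemma lin_pos (r : R) i1 j1 i2 j2 a m :
  List.In r (rules G) ->
  0 < i1 <= size (rfun r) -> 0 < j1 <= size (Defs.comp r i1) ->
  0 < i2 <= size (rfun r) -> 0 < j2 <= size (Defs.comp r i2) ->
  symat r i1 j1 = Var a m -> symat r i2 j2 = Var a m -> (i1, j1) = (i2, j2).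
Proof.
move=> Hr /andP[Hi1 Hi1'] /andP[Hj1 Hj1'] /andP[Hi2 Hi2'] /andP[Hj2 Hj2'] E1 E2.
have Hlin := proj1 (kG Hr) a m.
rewrite count_flatten in Hlin.
case: (eqVneq (i1, j1) (i2, j2)) => // Hne; exfalso.
have P1' : is_var_ij a m (symat r i1 j1) by rewrite E1 /= !eqxx.
have P2' : is_var_ij a m (symat r i2 j2) by rewrite E2 /= !eqxx.
have Hsz : size [seq count (is_var_ij a m) x | x <- rfun r] = size (rfun r)
  by rewrite size_map.
have Hnth : forall i, 0 < i <= size (rfun r) ->
   nth 0 [seq count (is_var_ij a m) x | x <- rfun r] i.-1 =
   count (is_var_ij a m) (Defs.comp r i).
  move=> i /andP[H1 H2]; rewrite (nth_map [::]) //.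
  by rewrite prednK.
case: (eqVneq i1 i2) => [Ei|Hi].
  subst i2.
  have Hj : j1.-1 != j2.-1.
    apply/eqP=> Ej; move/eqP: Hne; apply; congr pair.
    by rewrite -(prednK Hj1) -(prednK Hj2) Ej.
  have := count2 (x0 := Var 0 0) Hj _ _ P1' P2'.
  rewrite !prednK // => /(_ Hj1' Hj2') H2.
  have := nth_sumn [seq count (is_var_ij a m) x | x <- rfun r] i1.-1.
  rewrite Hnth ?Hi1 // => H3.
  by have := leq_trans (leq_trans H2 H3) Hlin.
have Hi' : i1.-1 != i2.-1.
  by apply/eqP=> Ei; move/eqP: Hi; apply; rewrite -(prednK Hi1) -(prednK Hi2) Ei.
have Pc1 : 0 < count (is_var_ij a m) (Defs.comp r i1).
  rewrite -has_count; apply/(has_nthP (Var 0 0)); exists j1.-1 => //.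
  by rewrite prednK.
have Pc2 : 0 < count (is_var_ij a m) (Defs.comp r i2).
  rewrite -has_count; apply/(has_nthP (Var 0 0)); exists j2.-1 => //.
  by rewrite prednK.
have := sumn2 (ns := [seq count (is_var_ij a m) x | x <- rfun r]) Hi'.
rewrite Hsz !Hnth ?Hi1 ?Hi2 ?Hi1' ?Hi2' // !prednK //.
move=> /(_ Hi1' Hi2' Pc1 Pc2) H.
by have := leq_trans H Hlin.
Qed.

Lemma mem_In (T : eqType) (x : T) (s : seq T) : x \in s -> List.In x s.
Proof.
elim: s => [|y s IH] //=; rewrite in_cons => /orP [/eqP ->|/IH]; by [left|right].
Qed.

Lemma final_bound h q ts rho :
  Inv h q ts -> count (Pt rho) h <= k.
Proof.
move=> I.
case: (leqP (size rho) 1) => Hs.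
  apply: leq_trans (sub_count (a2 := P1) _ h) _.
    move=> it /andP[H1 /eqP H2]; by rewrite /P1 H1 H2 Hs.
  by case: (iR I) => [->|[-> [_ ->]]].
rewrite (iC I Hs) -size_filter.
set L := [seq e <- EE h | etau e == rho].
have HL : forall e, List.In e L -> List.In e (EE h) /\ etau e = rho.
  rewrite /L; elim: (EE h) => [|x s IH] //= e.
  case: ifP => /= Hx.
    by case=> [<-|/IH [H1 H2]]; [split; [left|apply/eqP]|split; [right|]].
  by move/IH=> [H1 H2]; split; [right|].
case EL: L => [|e0 L'] //.
have He0 : List.In e0 L by rewrite EL; left.
set r0 := er e0.
have Hr : forall e, List.In e L -> er e = r0.
  move=> e /HL [H1 H2]; have [H1' H2'] := HL _ He0.
  apply: (RA_fun I (iErule I H1)); rewrite H2 -H2'; exact: (iErule I H1').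
rewrite -EL.
set T3 := [seq (etau e, ei e, ej e) | e <- L].
set LP := [seq (ei e, ej e) | e <- L].
have -> : size L = size LP by rewrite size_map.
have uL : uniq T3.
  have := filter_uniq (fun x : seq nat * nat * nat => x.1.1 == rho) (iEuniq I).
  by rewrite filter_map.
have HT3 : forall x, x \in T3 -> exists e, List.In e L /\ x = (etau e, ei e, ej e).
  by move=> x Hx; exact: In_map (mem_In Hx).
have HLP : forall x, x \in LP -> exists e, List.In e L /\ x = (ei e, ej e).
  by move=> x Hx; exact: In_map (mem_In Hx).
have uLP : uniq LP.
  have -> : LP = [seq (x.1.2, x.2) | x <- T3] by rewrite -map_comp.
  rewrite map_inj_in_uniq //.
  move=> x1 x2 /HT3 [e1 [He1 ->]] /HT3 [e2 [He2 ->]] /= [-> ->].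
  by rewrite (proj2 (HL _ He1)) (proj2 (HL _ He2)).
set F := fun x : nat * nat => mofr r0 x.1 x.2.
have HF : forall x, x \in LP -> exists m, symat r0 x.1 x.2 = Var (last 0 rho) m /\
     0 < m <= k /\ 0 < x.1 <= size (rfun r0) /\ 0 < x.2 <= size (Defs.comp r0 x.1) /\
     F x = m.
  move=> x /HLP [e [He ->]] /=.
  have [He' Ht] := HL _ He.
  have [Hr0 [Hi [Hj [m [Em Hm]]]]] := iEvar I He'.
  rewrite -(Hr _ He) -Ht; exists m; split => //; split => //; split => //; split => //.
  by change (mofr r0 (ei e) (ej e) = m); rewrite -(Hr _ He) /mofr Em.
have Hr0 : List.In r0 (rules G) by have := iEvar I (proj1 (HL _ He0)); case.
rewrite -(size_map F).
have -> : k = size (iota 1 k) by rewrite size_iota.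
apply: uniq_leq_size.
  rewrite map_inj_in_uniq // => x1 x2 H1 H2 EF.
  have [m1 [E1 [Hm1 [Hi1 [Hj1 F1]]]]] := HF _ H1.
  have [m2 [E2 [Hm2 [Hi2 [Hj2 F2]]]]] := HF _ H2.
  move: E2; rewrite -F2 -EF F1 => E2.
  case: x1 x2 {H1 H2 EF F1 F2 HF} E1 E2 Hi1 Hj1 Hi2 Hj2 => [a1 b1] [a2 b2] /= E1 E2 Hi1 Hj1 Hi2 Hj2.
  exact: (lin_pos Hr0 Hi1 Hj1 Hi2 Hj2 E1 E2).
move=> y /mapP [x Hx ->].
have [m [_ [Hm [_ [_ ->]]]]] := HF _ Hx.
by rewrite mem_iota add1n ltnS.
Qed.

Lemma init_inv : Inv [::] (SBox G) (init_ts (mgam G)).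
Proof.
split => //=.
- move=> s Hs; rewrite /glab /=; case: ifP => _; rewrite (negbTE Hs) /=;
  split => // /pref_nil /eqP; by rewrite (negbTE Hs).
- by move=> s; rewrite /glab /=; case: ifP => _; case: (s == [::]).
- by move=> s r i j; rewrite /glab /=; case: ifP => _; case: (s == [::]).
- by left.
- move=> pi i p [[_ [r //]]|[[_ [_ [r [i' [j' [//]]]]]]|[kap [r]]]].
  by rewrite /glab /=; case: ifP => _; case: (_ == [::]).
Qed.


Lemma EE_rcons h it :
  EE (rcons h it) = EE h ++ (if ent_of it is Some e then [:: e] else [::]).
Proof. by rewrite /EE -cats1 pmap_cat /=; case: (ent_of it). Qed.

Lemma Started_mono E E2 pi m : Started E pi m -> Started (E ++ E2) pi m.
Proof.
case=> [H|[e [He H]]]; [by left|right; exists e; split=> //].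
by apply/In_cat; left.
Qed.

Lemma rcons_inj2 (p1 p2 : seq nat) a1 a2 : rcons p1 a1 = rcons p2 a2 -> p1 = p2.
Proof. by move=> E; rewrite -(parent_rcons p1 a1) E parent_rcons. Qed.

Lemma count_rcons' (T : Type) (P : pred T) s x :
  count P (rcons s x) = count P s + P x.
Proof. by rewrite -cats1 count_cat /= addn0. Qed.

Lemma ptr_SBar_xi h r i j ts :
  Inv h (SBar r i j) ts -> xi ts (ptr ts) <> None.
Proof.
move=> I; have Hne : ptr ts != [::] by have := iP3 I.
have := proj2 (iP2 I Hne) (pref_refl _); rewrite glab_SBar.
by case: (xi ts (ptr ts)).
Qed.

Lemma noent_step h q ts it q' ts' :
  Inv h q ts ->
  xi ts' [::] = Some At ->
  (forall s, s != [::] -> (onact (glab q' ts' s) <-> pref s (ptr ts'))) ->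
  (forall s, glab q' ts' s = Some (Lab (GBox G)) -> size s = 1) ->
  (forall s r i j, glab q' ts' s = Some (Lab (GBar r i j)) -> 2 <= size s) ->
  stinv q' ts' ->
  (forall s, xi ts s <> None -> xi ts' s <> None) ->
  ent_of it = None -> is_push_or_up (t_instr it.1) = false ->
  (forall pi r, RA q ts pi r -> RA q' ts' pi r) ->
  (forall pi i p, AR q' ts' pi i p -> exists p0, p0 <= p /\ AR q ts pi i p0) ->
  Inv (rcons h it) q' ts'.
Proof.
move=> I H0 H2 H4a H4b H3 Hmono Hent Hpu HRA HAR.
have HE : EE (rcons h it) = EE h by rewrite EE_rcons Hent cats0.
split => //; rewrite ?HE.
- rewrite count_rcons' /P1 Hpu /= addn0.
  case: (iR I) => [->|[-> [Hx ->]]]; [by left|right; split=> //; split=> //].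
  exact: Hmono.
- move=> t Ht; rewrite count_rcons' /Pt Hpu /= addn0; exact: iC I t Ht.
- move=> e He; apply: Hmono; exact: iE0 I e He.
- exact: iEvar I.
- exact: iEuniq I.
- move=> e He; apply: HRA; exact: iErule I e He.
- move=> e p He /HAR [p0 [Hp0 HA]]; apply: leq_trans Hp0; exact: iEprog I e p0 He HA.
- exact: iEstart I.
- move=> pi i p /HAR [p0 [_ HA]]; exact: iEact I pi i p0 HA.
Qed.

Lemma ent_step h q ts it q' ts' r i j kap m :
  Inv h q ts ->
  q = SBar r i j.-1 ->
  sidec r i j kap m ->
  ptr ts' = rcons (ptr ts) kap ->
  (forall s, glab q' ts' s =
     if s == rcons (ptr ts) kap then Some (Lab (GBar r i j)) else glab q ts s) ->
  xi ts' [::] = xi ts [::] ->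
  (forall s, xi ts s <> None -> xi ts' s <> None) ->
  stinv q' ts' ->
  ent_of it = Some (mkE (rcons (ptr ts) kap) r i j) ->
  is_push_or_up (t_instr it.1) = true ->
  conf_ptr it.2 = rcons (ptr ts) kap ->
  (forall pi r0, RA q ts pi r0 -> RA q' ts' pi r0) ->
  (forall pi i' p', AR q' ts' pi i' p' ->
      (pi = rcons (ptr ts) kap /\ p' = 0 /\ i' = m) \/
      (exists kap' r2, glab q' ts' (rcons pi kap') = Some (Lab (GBar r2 i' p')))) ->
  (forall e, List.In e (EE h) -> parent (etau e) = rcons (ptr ts) kap -> ei e = m -> False) ->
  Inv (rcons h it) q' ts'.
Proof.
move=> I Eq Hsc Ept Hgl Hx0 Hmono Hst Hent Hpu Hcp HRA HAR Hfresh.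
set p := ptr ts in Ept Hgl Hent Hcp HAR Hfresh *.
set tau := rcons p kap in Ept Hgl Hent Hcp HAR Hfresh *.
have Hpne : p != [::] by have := iP3 I; rewrite Eq.
have Hstau : 2 <= size tau.
  by rewrite /tau size_rcons ltnS; move: Hpne; case: (p).
have Hptau : parent tau = p by rewrite /tau parent_rcons.
have [Hr [Hi [Hj [Esym Hm]]]] := Hsc.
have HAp : AR q ts p i j.-1 by left; split=> //; exists r.
set e0 := mkE tau r i j.
have HE : EE (rcons h it) = EE h ++ [:: e0] by rewrite EE_rcons Hent.
have InE : forall e, List.In e (EE h ++ [:: e0]) -> List.In e (EE h) \/ e = e0.
  by move=> e /In_cat [H|[H|[]]]; [left|right].
have Hglp : forall kap' r2 i2 j2,
    glab q ts (rcons p kap') = Some (Lab (GBar r2 i2 j2)) -> False.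
  move=> kap' r2 i2 j2 E; have := pref_size (GBar_pref I E).
  by rewrite size_rcons ltnn.
have Hxp : xi ts p <> None by move: I; rewrite Eq => I; exact: ptr_SBar_xi I.
split; rewrite ?HE.
- by rewrite Hx0 (iP0 I).
- move=> s Hs; rewrite Hgl Ept pref_rcons.
  case: eqP => [->|Hne] /=; first by split.
  exact: (iP2 I Hs).
- move=> s; rewrite Hgl; case: eqP => // _; exact: iP4a I s.
- move=> s r2 i2 j2; rewrite Hgl; case: eqP => [->|_] //; exact: iP4b I s r2 i2 j2.
- exact: Hst.
- rewrite count_rcons' /P1 Hpu Hcp /= leqNgt Hstau /= addn0.
  case: (iR I) => [->|[-> [Hx ->]]]; [by left|right; split=> //; split=> //].
  exact: Hmono.
- move=> t Ht; rewrite count_rcons' /Pt Hpu Hcp /= count_cat (iC I Ht) /=.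
  by rewrite addn0 eq_sym.
- move=> e /InE [He|->]; apply: Hmono; [exact: iE0 I e He|by rewrite Hptau].
- move=> e /InE [He|->]; first exact: iEvar I e He.
  by split=> //; split=> //; split=> //; exists m; rewrite /= /tau last_rcons.
- rewrite map_cat cat_uniq (iEuniq I) /= andbT orbF.
  apply/negP => Hx.
  have [e [He Ee]] := In_map (mem_In Hx).
  have Hx' : (etau e, ei e, ej e) = (tau, i, j) by rewrite -Ee.
  case: Hx' => Et Ei Ej.
  have := iEprog I He; rewrite Et Hptau Ei Ej => /(_ _ HAp).
  by case: (j) Hj => // j' _; rewrite ltnn.
- move=> e /InE [He|->]; first by apply: HRA; exact: iErule I e He.
  rewrite Hptau; right; left; exists kap, i, j; by rewrite Hgl eqxx.
- move=> e p' He' HA.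
  case: (HAR _ _ _ HA) => [[Epar [-> Ei]]|[kap' [r2 Eg]]].
    case: (InE _ He') => [He|Ee].
      by case: (Hfresh e He Epar Ei).
    move: Epar; rewrite Ee /= Hptau => Epar.
    have Hsz : size tau = (size p).+1 by rewrite /tau size_rcons.
    by move: Hsz; rewrite -Epar; lia.
  move: Eg; rewrite Hgl; case: eqP => [Eq2 [_ Ei Ep]|_ Eg].
    have Epar := rcons_inj2 Eq2; rewrite -Ep.
    case: (InE _ He') => [He|->] //.
    have := iEprog I He; rewrite Epar -Ei => /(_ _ HAp) H.
    apply: leq_trans H _; exact: leq_pred.
  case: (InE _ He') => [He|Ee].
    apply: (iEprog I He); right; right; exists kap', r2; exact: Eg.
  by move: Eg; rewrite Ee /= Hptau => /Hglp.
- move=> e /InE [He|->]; first by apply: Started_mono; exact: iEstart I e He.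
  rewrite /= Hptau; apply: Started_mono; exact: iEact I _ _ _ HAp.
- move=> pi i' p' HA.
  case: (HAR _ _ _ HA) => [[-> [_ ->]]|[kap' [r2 Eg]]].
    right; exists e0; split; first by apply/In_cat; right; left.
    by split=> //; rewrite /mofr /= Esym.
  move: Eg; rewrite Hgl; case: eqP => [Eq2 [_ Ei Ep]|_ Eg].
    have Epar := rcons_inj2 Eq2; rewrite Epar -Ei; apply: Started_mono.
    exact: iEact I _ _ _ HAp.
  apply: Started_mono; apply: (iEact I (p := p')); right; right; exists kap', r2.
  exact: Eg.
Qed.

Lemma set_inv (g : mgam G) ts ts1 : apply_instr (ISet g) ts = Some ts1 ->
  ptr ts != [::] /\ ts1 = TS (upd (xi ts) (ptr ts) (Lab g)) (ptr ts).
Proof. rewrite /apply_instr; case E: (ptr ts) => [|x s] //= [<-]; by rewrite -E. Qed.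

Lemma push_inv n (g : mgam G) ts ts1 : apply_instr (IPush n g) ts = Some ts1 ->
  xi ts (rcons (ptr ts) n) = None /\
  ts1 = TS (upd (xi ts) (rcons (ptr ts) n) (Lab g)) (rcons (ptr ts) n).
Proof. rewrite /apply_instr; case E: (xi ts (rcons (ptr ts) n)) => [x|] //= [<-] //. Qed.

Lemma up_inv n (ts ts1 : tst) : apply_instr (IUp n) ts = Some ts1 ->
  xi ts (rcons (ptr ts) n) <> None /\ ts1 = TS (xi ts) (rcons (ptr ts) n).
Proof. rewrite /apply_instr; case E: (xi ts (rcons (ptr ts) n)) => [x|] //= [<-] //. Qed.

Lemma down_inv (ts ts1 : tst) : apply_instr IDown ts = Some ts1 ->
  ptr ts != [::] /\ ts1 = TS (xi ts) (parent (ptr ts)).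
Proof. rewrite /apply_instr; case E: (ptr ts) => [|x s] //= [<-] //. Qed.

Lemma upd_neq (f : seq nat -> option (label (mgam G))) a v b :
  b != a -> upd f a v b = f b.
Proof. by rewrite /upd => /negbTE ->. Qed.

Lemma upd_same (f : seq nat -> option (label (mgam G))) a v :
  upd f a v a = Some v.
Proof. by rewrite /upd eqxx. Qed.

Lemma upd_mono (f : seq nat -> option (label (mgam G))) a v b :
  f b <> None -> upd f a v b <> None.
Proof. by rewrite /upd; case: eqP. Qed.

Lemma glab_SBox ts s : glab (SBox G) ts s = xi ts s.
Proof. by rewrite /glab; case: ifP. Qed.

Lemma rcons_parent (p : seq nat) : p != [::] -> p = rcons (parent p) (last 0 p).
Proof. by case: p => [|x s] //= _; rewrite -lastI. Qed.

Lemma step_inv h q ts w t q1 ts1 w1 :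
  Inv h q ts -> List.In t (trans M) -> step t (q, ts, w) (q1, ts1, w1) ->
  Inv (rcons h (t, (q1, ts1, w1))) q1 ts1.
Proof.
move=> I Hin Hst.
case: (trans_inv Hin) Hst
  => [r Hr Hini|r| |r i j a|r i j kap m r' Hsc|r i j kap m Hsc|r i j kap m r' Esym|r i j r' m|r i j]
     /= [Eq [Eq1 [Ew [Hh Hap]]]]; subst q q1.
-
  have Hp : ptr ts = [::] := iP3 I.
  have [Hx1 Ets1] := push_inv Hap; rewrite Hp /= in Hx1 Ets1; subst ts1.
  set f := upd (xi ts) [:: 1] (Lab (GBox G)).
  have Hf1 : f [:: 1] = Some (Lab (GBox G)) by rewrite /f upd_same.
  have Hfn : forall s, s != [:: 1] -> f s = xi ts s by move=> s Hs; rewrite /f upd_neq.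
  have Hgl : forall s, glab (SBar r 1 0) (TS f [:: 1]) s = f s by move=> s; rewrite glab_SBar.
  have HE : EE (rcons h (SBox G, None, PAll, IPush 1 (GBox G), SBar r 1 0,
         (SBar r 1 0, {| xi := f; ptr := [:: 1] |}, w1))) = EE h.
    by rewrite EE_rcons cats0.
  have Hk : 0 < k.
    have [_ [_ [_ [_ Hwf]]]] := wfG.
    have [Hsz _] := Hwf r Hr.
    have [_ [_ [Hsort _]]] := wfG.
    apply: leq_trans (proj2 (kG Hr)); rewrite /fanout Hsz; exact: Hsort.
  have Hoff : forall s, s != [::] -> ~ onact (xi ts s).
    move=> s Hs; rewrite -glab_SBox (iP2 I Hs) Hp => /pref_nil Es.
    by move: Hs; rewrite Es.
  split; rewrite ?HE.
  + by rewrite /= Hfn ?(iP0 I).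
  + move=> s Hs; rewrite Hgl /=.
    case: (eqVneq s [:: 1]) => [->|Hs1].
      by rewrite Hf1; split=> // _; exact: pref_refl.
    rewrite Hfn // (pref_rcons s [::] 1) (negbTE Hs1) /=.
    split=> [/(Hoff s Hs) //|/pref_nil Es]; by move: Hs; rewrite Es.
  + move=> s; rewrite Hgl; case: (eqVneq s [:: 1]) => [->|Hs1] //.
    rewrite Hfn // => E; apply: (iP4a I); by rewrite glab_SBox.
  + move=> s r2 i2 j2; rewrite Hgl; case: (eqVneq s [:: 1]) => [->|Hs1].
      by rewrite Hf1.
    rewrite Hfn // => E; apply: (iP4b (r := r2) (i := i2) (j := j2) I); by rewrite glab_SBox.
  + by [].
  + rewrite count_rcons' /P1 /= addn1; right.
    case: (iR I) => [->|[_ [Hx1' _]]] //; split=> //; split=> //; by rewrite Hf1.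
  + move=> t0 Ht; rewrite count_rcons' /Pt /= (iC I Ht).
    have -> : ([:: 1] == t0) = false.
      by apply/negbTE/eqP => Et; move: Ht; rewrite -Et.
    by rewrite addn0.
  + move=> e He; rewrite /= /f; apply: upd_mono; exact: iE0 I e He.
  + exact: iEvar I.
  + exact: iEuniq I.
  + move=> e He; case: (iErule I He) => [[Ep [i0 [p0 //]]]|[[kap [i0 [j0 E]]]|E]].
    * right; left; exists kap, i0, j0; rewrite Hgl Hfn -?glab_SBox //.
      by apply/eqP => Es; move: E; rewrite Es glab_SBox Hx1.
    * right; right; rewrite /= Hfn //.
      by apply/eqP => Es; move: E; rewrite Es Hx1.
  + move=> e p' He [[Ep [r2 _]]|[[_ [_ [r2 [i2 [j2 [//]]]]]]|[kap [r2 E]]]].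
      by case: (iE0 I He); rewrite -Ep /=.
    move: E; rewrite Hgl; case: (eqVneq (rcons (parent (etau e)) kap) [:: 1]) => [->|Hs].
      by rewrite Hf1.
    rewrite Hfn // => E; apply: (iEprog I He); right; right; exists kap, r2.
    by rewrite glab_SBox.
  + exact: iEstart I.
  + move=> pi i' p' [[Ep [r2 _]]|[[_ [_ [r2 [i2 [j2 [//]]]]]]|[kap [r2 E]]]].
      by left; rewrite -Ep.
    move: E; rewrite Hgl; case: (eqVneq (rcons pi kap) [:: 1]) => [->|Hs].
      by rewrite Hf1.
    rewrite Hfn // => E; apply: (iEact (p := p') I); right; right; exists kap, r2.
    by rewrite glab_SBox.
-
  have [Hpne Ets1] := set_inv Hap; subst ts1.
  rewrite /= in Hh.
  set p := ptr ts in Hpne Hh *.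
  have Hgl : forall s, glab (SBoxM G) (TS (upd (xi ts) p (Lab (GRule r))) p) s =
                       glab (SBar r 1 (size (Defs.comp r 1))) ts s.
    move=> s; rewrite glab_SBar /glab /=; case: eqP => [->|/eqP Hs]; first by rewrite Hh.
    exact: (upd_neq _ _ Hs).
  apply: (noent_step I) => //.
  + rewrite /= upd_neq ?(iP0 I) //; by rewrite eq_sym.
  + move=> s Hs; rewrite Hgl; exact: iP2 I s Hs.
  + move=> s; rewrite Hgl; exact: iP4a I s.
  + move=> s r2 i2 j2; rewrite Hgl; exact: iP4b I s r2 i2 j2.
  + rewrite /= upd_same; split; last by exists r.
    apply: (iP4a I); by rewrite glab_SBar.
  + move=> s; exact: upd_mono.
  + move=> pi r0 [[Ep [i0 [p0 [-> _ _]]]]|[[kap [i0 [j0 E]]]|E]].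
    * by right; right; rewrite /= -Ep upd_same.
    * by right; left; exists kap, i0, j0; rewrite Hgl.
    * right; right; rewrite /= upd_neq //; apply/eqP => Epi; move: E.
      by rewrite Epi Hh.
  + move=> pi i' p' [[Ep [r2 //]]|[[_ [_ [r2 [i2 [j2 [//]]]]]]|[kap [r2 E]]]].
    exists p'; split=> //; right; right; exists kap, r2; by rewrite -Hgl.
-
  have [Hpne Ets1] := down_inv Hap; subst ts1.
  have [Hsz1 [r0 Hxp]] := iP3 I.
  set p := ptr ts in Hpne Hsz1 Hxp *.
  have Hpar : parent p = [::] by case: (p) Hsz1 => [|x [|y s]].
  have Hgl : forall s, glab (SBox G) (TS (xi ts) (parent p)) s = xi ts s.
    by move=> s; rewrite glab_SBox.
  have Hnp : forall s, s != p -> glab (SBoxM G) ts s = xi ts s.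
    by move=> s Hs; rewrite glab_off.
  have Hoff : forall s, s != [::] -> ~ onact (xi ts s).
    move=> s Hs; case: (eqVneq s p) => [->|Hsp]; first by rewrite Hxp.
    rewrite -Hnp // => /(iP2 I Hs) Hpr.
    have Hsz := pref_size Hpr; move: Hsz; rewrite Hsz1 => Hsz.
    have Hs1 : size s = 1 by move: Hs Hsz; case: (s) => [|x [|y t0]].
    move/eqP: Hsp; apply; apply: (pref_uniq Hpr (pref_refl _)); by rewrite Hs1.
  apply: (noent_step I) => //.
  + exact: iP0 I.
  + move=> s Hs; rewrite Hgl /= Hpar; split=> [/(Hoff s Hs) //|/pref_nil Es].
    by move: Hs; rewrite Es.
  + move=> s; rewrite Hgl => E.
    case: (eqVneq s [::]) => [Es|Hs]; first by move: E; rewrite Es (iP0 I).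
    by case: (Hoff s Hs); rewrite E.
  + move=> s r2 i2 j2; rewrite Hgl => E.
    case: (eqVneq s [::]) => [Es|Hs]; first by move: E; rewrite Es (iP0 I).
    by case: (Hoff s Hs); rewrite E.
  + move=> pi r2 [[Ep [i0 [p0 //]]]|[[kap [i0 [j0 E]]]|E]].
    * right; left; exists kap, i0, j0; rewrite Hgl -Hnp //.
      by apply/eqP => Es; move: E; rewrite Es /glab eqxx.
    * by right; right.
  + move=> pi i' p' [[Ep [r2 //]]|[[_ [_ [r2 [i2 [j2 [//]]]]]]|[kap [r2 E]]]].
    exists p'; split=> //; right; right; exists kap, r2.
    move: E; rewrite Hgl => E.
    by case: (Hoff _ (rcons_nil pi kap)); rewrite E.
-
  case: Hap => <-.
  apply: (noent_step I) => //.
  + exact: iP0 I.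
  + move=> s Hs; rewrite glab_SBar -(glab_SBar r i j.-1); exact: iP2 I s Hs.
  + move=> s; rewrite glab_SBar -(glab_SBar r i j.-1); exact: iP4a I s.
  + move=> s r2 i2 j2; rewrite glab_SBar -(glab_SBar r i j.-1); exact: iP4b I s r2 i2 j2.
  + exact: iP3 I.
  + move=> pi r0 [[Ep [i0 [p0 [-> _ _]]]]|[[kap [i0 [j0 E]]]|E]].
    * by left; split=> //; exists i, j.
    * by right; left; exists kap, i0, j0; rewrite glab_SBar -(glab_SBar r i j.-1).
    * by right; right.
  + move=> pi i' p' [[Ep [r2 [_ <- <-]]]|[[_ [_ [r2 [i2 [j2 [//]]]]]]|[kap [r2 E]]]].
    * exists j.-1; split; [exact: leq_pred|by left; split=> //; exists r].
    * exists p'; split=> //; right; right; exists kap, r2.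
      by rewrite glab_SBar -(glab_SBar r i j.-1) in E.
-
  have [Hxt Ets1] := push_inv Hap; subst ts1.
  set p := ptr ts in Hxt *.
  set tau := rcons p kap in Hxt *.
  set f := upd (xi ts) tau (Lab (GBar r i j)).
  have Hfn : forall s, s != tau -> f s = xi ts s by move=> s Hs; rewrite /f upd_neq.
  apply: (ent_step (m := m) I (erefl _) Hsc) => //.
  + move=> s; rewrite !glab_SBar /= /f /upd; by case: eqP.
  + by rewrite /= Hfn // eq_sym rcons_nil.
  + move=> s; exact: upd_mono.
  + by rewrite /= rcons_nil.
  + move=> pi r0 [[Ep [i0 [p0 [<- _ _]]]]|[[kap' [i0 [j0 E]]]|E]].
    * right; left; exists kap, i, j; by rewrite glab_SBar -Ep /= /f /upd /tau /p eqxx.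
    * right; left; exists kap', i0, j0; rewrite glab_SBar /= Hfn -?(glab_SBar r i j.-1) //.
      by apply/eqP => Es; move: E; rewrite Es glab_SBar Hxt.
    * right; right; rewrite /= Hfn //.
      by apply/eqP => Es; move: E; rewrite Es Hxt.
  + move=> pi i' p' [[Ep [r2 [_ <- <-]]]|[[_ [_ [r2 [i2 [j2 [//]]]]]]|HA]].
      by left; rewrite -Ep.
    by right.
  + move=> e He Epar _; by case: (iE0 I He); rewrite Epar.
-
  have [Hxt Ets1] := up_inv Hap; subst ts1.
  set p := ptr ts in Hxt *.
  set tau := rcons p kap in Hxt *.
  have [Hr [Hi [Hj [Esym Hm]]]] := Hsc.
  have Hpne : p != [::] by have := iP3 I.
  have Hstau : 2 <= size tau.
    by rewrite /tau size_rcons ltnS; move: Hpne; case: (p).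
  have Hnotact : ~ onact (xi ts tau).
    rewrite -(glab_SBar r i j.-1) (iP2 I (rcons_nil _ _)) => /pref_size.
    by rewrite /tau size_rcons ltnn.
  have Hgl : forall s, glab (SBarP r i j) (TS (xi ts) tau) s =
      if s == tau then Some (Lab (GBar r i j)) else glab (SBar r i j.-1) ts s.
    by move=> s; rewrite glab_SBar /glab /=; case: ifP.
  have HAp : AR (SBar r i j.-1) ts p i j.-1 by left; split=> //; exists r.
  apply: (ent_step (m := m) I (erefl _) Hsc) => //.
  + move=> pi r0 [[Ep [i0 [p0 [<- _ _]]]]|[[kap' [i0 [j0 E]]]|E]].
    * right; left; exists kap, i, j; by rewrite Hgl -Ep eqxx.
    * right; left; exists kap', i0, j0; rewrite Hgl; case: eqP => // Es.
      by move: E; rewrite Es glab_SBar => E; move: Hnotact; rewrite E.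
    * by right; right.
  + move=> pi i' p' [[Ep [r2 //]]|[[Ep [-> [r2 [i2 [j2 [[<- <- <-] ->]]]]]]|HA]].
      by left; split=> //; split=> //; rewrite /mofr Esym.
    by right.
  + move=> e He Epar Ei.
    have := iEstart I He; rewrite Epar Ei => [[|[e' [He' [Et' Em']]]]].
      by rewrite leqNgt Hstau.
    have Hpe' : parent (etau e') = p by rewrite Et' /tau parent_rcons.
    have Hre' : er e' = r.
      apply: (RA_fun I (iErule I He')); rewrite Hpe'; left; split=> //; by exists i, j.-1.
    have [Hr' [Hi' [Hj' [m' [Em Hm']]]]] := iEvar I He'.
    have Hmm : m' = m by rewrite -Em' /mofr Em.
    rewrite Hre' Et' /tau last_rcons Hmm in Em.
    rewrite Hre' in Hi' Hj'.
    have := lin_pos Hr Hi' Hj' Hi Hj Em Esym; case => Ei' Ej'.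
    have := iEprog I He'; rewrite Hpe' Ei' Ej' => /(_ _ HAp).
    by case: (j) Hj => // j0 _; rewrite ltnn.
-
  have [Hpne Ets1] := set_inv Hap; subst ts1.
  rewrite /= in Hh.
  set p := ptr ts in Hpne Hh *.
  have Hgl : forall s, glab (SBar r' m 0) (TS (upd (xi ts) p (Lab (GBar r i j))) p) s =
                       glab (SBarP r i j) ts s.
    move=> s; rewrite glab_SBar /glab /=; case: eqP => [->|/eqP Hs].
      by rewrite upd_same.
    exact: (upd_neq _ _ Hs).
  apply: (noent_step I) => //.
  + rewrite /= upd_neq ?(iP0 I) //; by rewrite eq_sym.
  + move=> s Hs; rewrite Hgl; exact: iP2 I s Hs.
  + move=> s; rewrite Hgl; exact: iP4a I s.
  + move=> s r2 i2 j2; rewrite Hgl; exact: iP4b I s r2 i2 j2.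
  + move=> s; exact: upd_mono.
  + move=> pi r0 [[Ep [i0 [p0 //]]]|[[kap' [i0 [j0 E]]]|E]].
    * by right; left; exists kap', i0, j0; rewrite Hgl.
    * case: (eqVneq pi p) => [Epi|Hpi].
        move: E; rewrite Epi Hh => [[<-]]; left; split=> //; by exists m, 0.
      by right; right; rewrite /= upd_neq.
  + move=> pi i' p' [[Ep [r2 [_ <- <-]]]|[[_ [_ [r2 [i2 [j2 [//]]]]]]|[kap' [r2 E]]]].
    * exists 0; split=> //; right; left; split=> //; split=> //.
      by exists r, i, j; split=> //; rewrite /mofr Esym.
    * exists p'; split=> //; right; right; exists kap', r2; by rewrite -Hgl.
-
  have [Hpne Ets1] := set_inv Hap; subst ts1.
  rewrite /= in Hh.
  set p := ptr ts in Hpne Hh *.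
  have Hgl : forall s, glab (SBarM r i j) (TS (upd (xi ts) p (Lab (GRule r'))) p) s =
                       glab (SBar r' m (size (Defs.comp r' m))) ts s.
    move=> s; rewrite glab_SBar /glab /=; case: eqP => [->|/eqP Hs]; first by rewrite Hh.
    exact: (upd_neq _ _ Hs).
  apply: (noent_step I) => //.
  + rewrite /= upd_neq ?(iP0 I) //; by rewrite eq_sym.
  + move=> s Hs; rewrite Hgl; exact: iP2 I s Hs.
  + move=> s; rewrite Hgl; exact: iP4a I s.
  + move=> s r2 i2 j2; rewrite Hgl; exact: iP4b I s r2 i2 j2.
  + rewrite /= upd_same; split; last by exists r'.
    apply: (iP4b (r := r) (i := i) (j := j) I); by rewrite glab_SBar.
  + move=> s; exact: upd_mono.
  + move=> pi r0 [[Ep [i0 [p0 [-> _ _]]]]|[[kap [i0 [j0 E]]]|E]].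
    * by right; right; rewrite /= -Ep upd_same.
    * by right; left; exists kap, i0, j0; rewrite Hgl.
    * right; right; rewrite /= upd_neq //; apply/eqP => Epi; move: E.
      by rewrite Epi Hh.
  + move=> pi i' p' [[Ep [r2 //]]|[[_ [_ [r2 [i2 [j2 [//]]]]]]|[kap [r2 E]]]].
    exists p'; split=> //; right; right; exists kap, r2; by rewrite -Hgl.
-
  have [Hpne Ets1] := down_inv Hap; subst ts1.
  have [Hsz2 [r2 Hxp]] := iP3 I.
  set p := ptr ts in Hpne Hsz2 Hxp *.
  set p0 := parent p.
  have Ep : p = rcons p0 (last 0 p) by exact: rcons_parent.
  have Hp0 : p0 != [::].
    apply/eqP => E0; move: Hsz2; rewrite Ep E0 //.
  have Hgl : forall s, glab (SBar r i j) (TS (xi ts) p0) s = xi ts s.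
    by move=> s; rewrite glab_SBar.
  have Hnp : forall s, s != p -> glab (SBarM r i j) ts s = xi ts s.
    by move=> s Hs; rewrite glab_off.
  have Hgp : glab (SBarM r i j) ts p = Some (Lab (GBar r i j)) by rewrite /glab eqxx.
  apply: (noent_step I) => //.
  + exact: iP0 I.
  + move=> s Hs; rewrite Hgl /=.
    case: (eqVneq s p) => [->|Hsp].
      rewrite Hxp; split=> // /pref_size; rewrite {1}Ep size_rcons; lia.
    have Hpr : pref s p = pref s p0.
      by rewrite [in LHS]Ep pref_rcons -Ep (negbTE Hsp).
    rewrite -Hpr -Hnp //; exact: iP2 I s Hs.
  + move=> s; rewrite Hgl => E.
    case: (eqVneq s p) => [Es|Hs]; first by move: E; rewrite Es Hxp.
    apply: (iP4a I); by rewrite Hnp.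
  + move=> s r3 i3 j3; rewrite Hgl => E.
    case: (eqVneq s p) => [Es|Hs]; first by move: E; rewrite Es Hxp.
    apply: (iP4b (r := r3) (i := i3) (j := j3) I); by rewrite Hnp.
  + move=> pi r3 [[_ [i0 [p0' //]]]|[[kap [i0 [j0 E]]]|E]].
    * case: (eqVneq (rcons pi kap) p) => [Es|Hs].
        move: E; rewrite Es Hgp => [[<- _ _]]; left; split.
          by rewrite /= (rcons_inj2 (etrans Es Ep)).
        by exists i, j.
      by right; left; exists kap, i0, j0; rewrite Hgl -Hnp.
    * by right; right.
  + move=> pi i' p' [[Ep' [r3 [_ <- <-]]]|[[_ [_ [r3 [i2 [j2 [//]]]]]]|[kap [r3 E]]]].
    * exists j; split=> //; right; right; exists (last 0 p), r.
      by rewrite /= in Ep'; rewrite -Ep' -Ep.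
    * exists p'; split=> //; right; right; exists kap, r3.
      move: E; rewrite Hgl => E.
      case: (eqVneq (rcons pi kap) p) => [Es|Hs]; first by move: E; rewrite Es Hxp.
      by rewrite Hnp.
Qed.

Lemma run_inv l : forall h q ts w, Inv h q ts -> is_run (M:=M) (q, ts, w) l ->
  Inv (h ++ l) (last (q, ts, w) (map snd l)).1.1 (last (q, ts, w) (map snd l)).1.2.
Proof.
elim: l => [|[t [[q1 ts1] w1]] l IH] h q ts w I /=; first by rewrite cats0.
move=> [Ht [Hs Hr]].
have I1 := step_inv I Ht Hs.
have := IH _ _ _ _ I1 Hr; by rewrite cat_rcons.
Qed.

End Proof.

Theorem mainTheorem4 (G : pmcfg) (k : nat) :
  wf_pmcfg G -> is_kMCFG G k -> k_restricted (M_of G) k.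
Proof.
move=> wfG kG w l [Hrun _] rho.
have I := run_inv wfG kG (init_inv G k) Hrun.
rewrite cat0s in I.
have := final_bound kG rho I. rewrite /Pt. exact.
Qed.
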